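(* Let $k$ be an algebraically closed field of characteristic $0$. For every $\mu\in k$, every integer $m\ge2$, every $s\ge0$, integers $m_1,\dots,m_s\ge1$ and $\lambda_1,\dots,\lambda_s\in k^\times$, there exists a $k$-valued pseudocharacter $\alpha$ of $\mathrm{Cob}_2$ with $$Z_\alpha(T)=\mu+mT+\sum_{i=1}^s\frac{m_i\lambda_i^{-1}}{1-\lambda_iT}.$$
   Context: $\mathrm{Cob}_2$ is the rigid symmetric monoidal category of oriented two-dimensional cobordisms between closed oriented one-manifolds, with unit the empty manifold $\emptyset$. An evaluation is a monoid homomorphism $\alpha:\mathrm{End}_{\mathrm{Cob}_2}(\emptyset)\to k$ ($\alpha(\emptyset)=1$, multiplicative on disjoint unions); it is determined by $\alpha_g:=\alpha(S_g)$, $S_g$ the closed connected oriented genus-$g$ surface, and $Z_\alpha(T)=\sum_{g\ge0}\alpha_gT^g$ (rational functions identified with their expansions at $T=0$). Extend $\alpha$ linearly. For an object $N$ and $n\ge1$, $e^-_{N,n}=\sum_{\sigma\in S_n}\mathrm{sgn}(\sigma)\sigma\in k\,\mathrm{End}(N^{\sqcup n})$ via permutation cobordisms; $\mathrm{cl}(f)$ denotes the closure (categorical trace) of an endomorphism $f$. $\deg_\alpha(N)$ is the least $d\ge0$ with $\alpha(\mathrm{cl}(h\circ e^-_{N,d+1}))=0$ for all $h\in\mathrm{End}_{\mathrm{Cob}_2}(N^{\sqcup(d+1)})$ ($\infty$ if none); $\alpha$ is a pseudocharacter of $\mathrm{Cob}_2$ if $\deg_\alpha(N)<\infty$ for every object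 $N$. *)

(* Defs.v *)
From HB Require Import structures.
From mathcomp Require Import all_boot all_order all_algebra all_fingroup.
Set Implicit Arguments. Unset Strict Implicit. Unset Printing Implicit Defensive.
Import GRing.Theory.
Local Open Scope ring_scope.

(* An endomorphism h of a disjoint union of circles indexed by a finite type I
   is (up to diffeomorphism rel boundary) given by:
   - c connected components, indexed by 'I_c,
   - a genus  gen x  for each component x,
   - for each input circle i the component  inp i  containing it,
   - for each output circle j the component outp j containing it.
   (Components hit by no boundary circle are closed components of h.)

   Precomposing with the permutation cobordism of tau (input i joined to
   output tau i) and closing up glues output j of h to input (tau j) of h.
   The resulting closed surface has one connected component per class of the
   equivalence relation generated by the gluing edges, and a class B with
   e_B gluing edges has genus  sum_{x in B} gen x + e_B - #|B| + 1  (Euler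
   characteristic). *)

Definition glue_rel (I : finType) (c : nat) (inp outp : I -> 'I_c)
  (tau : I -> I) : rel 'I_c :=
  fun x y => [exists j, ((outp j == x) && (inp (tau j) == y))
                     || ((outp j == y) && (inp (tau j) == x))].

Definition comp_genus (I : finType) (c : nat) (gen : 'I_c -> nat)
  (outp : I -> 'I_c) (B : {set 'I_c}) : nat :=
  ((\sum_(x in B) gen x) + #|[set j | outp j \in B]| + 1 - #|B|)%N.

(* alpha (cl (h o tau)) for an evaluation alpha given by alpha g = alpha(S_g),
   multiplicative on disjoint unions (empty product = alpha(empty) = 1). *)
Definition closure_eval (k : comNzRingType) (alpha : nat -> k) (I : finType)
  (c : nat) (gen : 'I_c -> nat) (inp outp : I -> 'I_c) (tau : I -> I) : k :=
  \prod_(B in equivalence_partition (connect (glue_rel inp outp tau)) [set: 'I_c])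
     alpha (comp_genus gen outp B).

(* The permutation cobordism of N^{d} (N = n circles) associated with s in S_d
   permutes the d blocks of n circles. *)
Definition block_perm (d n : nat) (s : 'S_d) : 'I_d * 'I_n -> 'I_d * 'I_n :=
  fun j => (s j.1, j.2).

(* alpha(cl(h o e^-_{N,d+1})) for N = n circles and h an endomorphism of
   N^{(d+1)} (circles indexed by 'I_(d+1) * 'I_n). *)
Definition antisym_trace (k : comNzRingType) (alpha : nat -> k) (n d c : nat)
  (gen : 'I_c -> nat) (inp outp : 'I_d.+1 * 'I_n -> 'I_c) : k :=
  \sum_(s : 'S_d.+1) (-1) ^+ odd_perm s * closure_eval alpha gen inp outp (block_perm s).

(* deg_alpha(N) < oo for every object N (= n circles). *)
Definition pseudocharacter (k : comNzRingType) (alpha : nat -> k) : Prop :=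
  forall n : nat, exists d : nat,
    forall (c : nat) (gen : 'I_c -> nat) (inp outp : 'I_d.+1 * 'I_n -> 'I_c),
      antisym_trace alpha gen inp outp = 0.

(* Main.v *)
Require Import Defs.
From HB Require Import structures.
From mathcomp Require Import all_boot all_order all_algebra all_fingroup.
From mathcomp Require Import zify ring.
Import GRing.Theory.
Local Open Scope ring_scope.

Module Helpers.
Set Implicit Arguments. Unset Strict Implicit.
Module G1.
Local Close Scope ring_scope.

Section Graph.
Variables (V I : finType) (src dst : I -> V).

Definition grel (D : {set I}) : rel V := fun x y =>
  [exists j in D, ((src j == x) && (dst j == y)) || ((src j == y) && (dst j == x))].

Lemma grel_sym D : symmetric (grel D).
Proof.
move=> x y; apply/existsP/existsP => -[j /andP[jD H]]; exists j;
  by rewrite jD /= orbC.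
Qed.

Lemma csym D : connect_sym (grel D).
Proof. exact: sym_connect_sym (grel_sym D). Qed.

Definition cls D z : {set V} := [set y in [set: V] | connect (grel D) z y].
Definition part D := equivalence_partition (connect (grel D)) [set: V].

Lemma partE D : part D = [set cls D z | z in [set: V]].
Proof. by []. Qed.

Lemma in_cls D z y : (y \in cls D z) = connect (grel D) z y.
Proof. by rewrite !inE. Qed.

Lemma cls_self D z : z \in cls D z.
Proof. by rewrite in_cls connect0. Qed.

Lemma cls_eq D z w : (cls D z == cls D w) = connect (grel D) z w.
Proof.
apply/eqP/idP => [E|H].
  by rewrite -in_cls E cls_self.
by apply/setP => y; rewrite !in_cls (same_connect (csym D) H).
Qed.

Lemma cls_in D z : cls D z \in part D.
Proof. by rewrite partE; apply: imset_f; rewrite inE. Qed.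

Lemma part_mem D B : B \in part D -> exists z, B = cls D z.
Proof. by rewrite partE => /imsetP[z _ ->]; exists z. Qed.

Lemma mem_part_cls D B z : B \in part D -> z \in B -> B = cls D z.
Proof.
move=> /part_mem[w ->]; rewrite in_cls => Hwz.
by apply/eqP; rewrite cls_eq.
Qed.

Section Add.
Variables (j0 : I) (D0 : {set I}).
Let x0 := src j0.
Let y0 := dst j0.
Let r := grel D0.
Let r' := grel (j0 |: D0).

Lemma grelU x y : r' x y = r x y || (((x0 == x) && (y0 == y)) || ((x0 == y) && (y0 == x))).
Proof.
rewrite /r' /r /grel; apply/existsP/orP.
  move=> [j /andP[]]; rewrite in_setU1 => /orP[/eqP-> H|jD H]; first by right.
  by left; apply/existsP; exists j; rewrite jD.
case=> [/existsP[j /andP[jD H]]|H].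
  by exists j; rewrite in_setU1 jD orbT.
by exists j0; rewrite in_setU1 eqxx.
Qed.

Definition Mset := cls D0 x0 :|: cls D0 y0.

Lemma sub_r : forall x y, connect r x y -> connect r' x y.
Proof.
apply: connect_sub => x y H; apply: connect1; by rewrite grelU H.
Qed.

Lemma conn_add z y :
  connect r' z y = connect r z y || ((z \in Mset) && (y \in Mset)).
Proof.
have e01 : connect r' x0 y0 by apply: connect1; rewrite grelU !eqxx orbT.
have e10 : connect r' y0 x0 by rewrite (csym (j0 |: D0)).
have toM w : w \in Mset -> connect r' w x0.
  rewrite in_setU !in_cls => /orP[H|H].
    by apply: sub_r; rewrite (csym D0).
  apply: connect_trans e10; apply: sub_r; by rewrite (csym D0).
apply/idP/idP; last first.
  case/orP => [/sub_r //|/andP[zM yM]].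
  apply: connect_trans (toM _ zM) _; by rewrite (csym (j0 |: D0)) toM.
move=> Hzy.
pose a := [pred w | connect r z w || ((z \in Mset) && (w \in Mset))].
have cla : closed r' a.
  apply: intro_closed; first exact: csym.
  have RM v : (v \in Mset) = connect r x0 v || connect r y0 v.
    by rewrite /Mset in_setU !in_cls.
  move=> u w; rewrite /a !inE -!RM.
  rewrite grelU => /orP[Ruw|Hed].
    case/orP => [Hzu|/andP[-> uM]].
      by rewrite (connect_trans Hzu (connect1 Ruw)).
    rewrite RM in uM; rewrite RM.
    by case/orP: uM => H; rewrite (connect_trans H (connect1 Ruw)) ?orbT.
  have x0M : x0 \in Mset by rewrite in_setU cls_self.
  have y0M : y0 \in Mset by rewrite in_setU cls_self orbT.
  have wM : w \in Mset by case/orP: Hed => [/andP[_ /eqP<-]|/andP[/eqP<- _]].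
  rewrite wM andbT => /orP[Hzu|/andP[-> _]]; last by rewrite orbT.
  apply/orP; right; rewrite RM.
  case/orP: Hed => /andP[/eqP Ex /eqP Ey]; subst u.
    by rewrite (csym D0) Hzu.
  by rewrite [connect r y0 z](csym D0) Hzu orbT.
have := closed_connect cla Hzy; rewrite !inE connect0 /= => <-.
by [].
Qed.

End Add.
End Graph.

End G1.
Import G1.

Section NLemma.
Variables (k : fieldType) (I S : finType).
Definition upd (l : {ffun I -> S}) j0 a : {ffun I -> S} :=
  [ffun j => if j == j0 then a else l j].

Lemma N_lemma (H : S -> {ffun I -> S} -> k) j0 :
  (forall a l a', H a (upd l j0 a') = H a l) ->
  #|S|%:R * \sum_(l : {ffun I -> S}) H (l j0) l = \sum_a \sum_(l : {ffun I -> S}) H a l.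
Proof.
move=> Hind.
have fib a a' : \sum_(l : {ffun I -> S} | l j0 == a') H a l = \sum_(l : {ffun I -> S} | l j0 == a) H a l.
  pose psi l := upd l j0 (tperm a a' (l j0)).
  have psiK : involutive psi.
    move=> l; apply/ffunP => j; rewrite /psi /upd !ffunE.
    case: eqP => [->|//]; by rewrite eqxx tpermK.
  rewrite (reindex_inj (inv_inj psiK)) /=.
  apply: eq_big => l.
    rewrite /psi /upd ffunE eqxx; apply/eqP/eqP => [E|->]; last by rewrite tpermL.
    by rewrite -(tpermK a a' (l j0)) E tpermR.
  by move=> _; rewrite /psi Hind.
have split1 (F : {ffun I -> S} -> k) :
    \sum_(l : {ffun I -> S}) F l = \sum_a' \sum_(l : {ffun I -> S} | l j0 == a') F l.
  by rewrite (partition_big (fun l : {ffun I -> S} => l j0) xpredT).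
have E1 : \sum_(l : {ffun I -> S}) H (l j0) l =
    \sum_a \sum_(l : {ffun I -> S} | l j0 == a) H a l.
  rewrite (split1 (fun l => H (l j0) l)); apply: eq_bigr => a _.
  by apply: eq_bigr => l /eqP ->.
have E2 a : \sum_(l : {ffun I -> S}) H a l =
    (\sum_(l : {ffun I -> S} | l j0 == a) H a l) *+ #|S|.
  rewrite (split1 (H a)).
  rewrite (eq_bigr (fun _ => \sum_(l : {ffun I -> S} | l j0 == a) H a l)).
    by rewrite sumr_const.
  by move=> a' _; exact: fib.
rewrite E1 mulr_sumr; apply: eq_bigr => a _; by rewrite E2 mulr_natl.
Qed.
End NLemma.

Section Frob.
Variables (k : fieldType) (A : comPzRingType) (eps : A -> k).
Hypotheses (eps0 : eps 0 = 0) (epsD : {morph eps : u v / u + v}).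
Variables (S : finType) (b bd : S -> A).
Hypothesis Hfrob : forall u v, \sum_a eps (u * b a) * eps (bd a * v) = eps (u * v).
Hypothesis HN : (#|S|%:R : k) != 0.
Definition hh := \sum_a b a * bd a.
Variables (V I : finType) (src dst : I -> V).

Lemma eps_sum (J : finType) (F : J -> A) : eps (\sum_j F j) = \sum_j eps (F j).
Proof. exact: (big_morph eps epsD eps0). Qed.

Definition cf x j a : A :=
  (if src j == x then b a else 1) * (if dst j == x then bd a else 1).
Definition Phi (D : {set I}) (f : V -> A) (l : {ffun I -> S}) :=
  \prod_(x : V) eps (f x * \prod_(j in D) cf x j (l j)).
Definition Lsum (D : {set I}) f := \sum_(l : {ffun I -> S}) Phi D f l.
Definition ecount (D : {set I}) (B : {set V}) : nat := \sum_(j in D) (src j \in B).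
Definition Fv (D : {set I}) (f : V -> A) (B : {set V}) :=
  eps (hh ^+ (ecount D B + 1 - #|B|) * \prod_(x in B) f x).

Lemma prod_if1 (B : {set V}) x0 (u : A) :
  \prod_(x in B) (if x0 == x then u else 1) = if x0 \in B then u else 1.
Proof.
case: ifP => H.
  rewrite (bigD1 x0) //= eqxx big1 ?mulr1 // => x /andP[_ /negbTE].
  by rewrite eq_sym => ->.
apply: big1 => x xB; case: eqP => // E; by rewrite E xB in H.
Qed.

Lemma prod_cf j0 (B : {set V}) a :
  \prod_(x in B) cf x j0 a =
  (if src j0 \in B then b a else 1) * (if dst j0 \in B then bd a else 1).
Proof. by rewrite /cf big_split /= !prod_if1. Qed.

Section Step.
Variables (j0 : I) (D0 : {set I}).
Hypothesis j0n : j0 \notin D0.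
Let x0 := src j0.
Let y0 := dst j0.
Let fa (f : V -> A) a := fun x => f x * cf x j0 a.

Lemma Lsum_step f :
  #|S|%:R * Lsum (j0 |: D0) f = \sum_a Lsum D0 (fa f a).
Proof.
rewrite /Lsum.
have -> : \sum_(l : {ffun I -> S}) Phi (j0 |: D0) f l = \sum_(l : {ffun I -> S}) Phi D0 (fa f (l j0)) l.
  apply: eq_bigr => l _; rewrite /Phi; apply: eq_bigr => x _.
  by rewrite big_setU1 //= mulrA.
apply: (@N_lemma k I S (fun a l => Phi D0 (fa f a) l) j0) => a l a'.
rewrite /Phi; apply: eq_bigr => x _; congr (eps (_ * _)).
apply: eq_bigr => j jD; rewrite /upd ffunE; case: eqP => // E.
by move: jD; rewrite E (negbTE j0n).
Qed.

Lemma ecount_add B : ecount (j0 |: D0) B = ((x0 \in B) + ecount D0 B)%N.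
Proof. by rewrite /ecount big_setU1. Qed.


Let r := grel src dst D0.
Let P0 := part src dst D0.
Let P := part src dst (j0 |: D0).
Let Bx := cls src dst D0 x0.
Let By := cls src dst D0 y0.
Let M := Mset src dst j0 D0.

Lemma inM z : (z \in M) = connect r x0 z || connect r y0 z.
Proof. by rewrite /M /Mset in_setU !in_cls. Qed.

Lemma M_closed z y : z \in M -> connect r z y -> y \in M.
Proof.
rewrite !inM => /orP[H|H] Hzy; by rewrite (connect_trans H Hzy) ?orbT.
Qed.

Lemma cls_conn (c : connect r x0 y0) z :
  cls src dst (j0 |: D0) z = cls src dst D0 z.
Proof.
apply/setP => y; rewrite !in_cls conn_add -/r -/M.
case E: (connect r z y) => //=.
rewrite !inM; apply/negP.
have hx w : connect r x0 w || connect r y0 w -> connect r x0 w.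
  case/orP => // H; exact: connect_trans c H.
move=> /andP[/hx Hz /hx Hy].
have : connect r z y by apply: connect_trans Hy; rewrite (csym src dst D0).
by rewrite E.
Qed.

Lemma part_conn (c : connect r x0 y0) : P = P0.
Proof. by rewrite /P /P0 !partE; apply: eq_imset => z; exact: cls_conn. Qed.

Lemma cls_nconn (nc : ~~ connect r x0 y0) z :
  cls src dst (j0 |: D0) z = if z \in M then M else cls src dst D0 z.
Proof.
apply/setP => y; rewrite in_cls conn_add -/r -/M.
case: ifP => zM /=.
  apply/idP/idP => [/orP[H|//]|->]; last by rewrite orbT.
  exact: M_closed zM H.
by rewrite orbF in_cls.
Qed.

Lemma x0M : x0 \in M. Proof. by rewrite inM connect0. Qed.
Lemma y0M : y0 \in M. Proof. by rewrite inM connect0 orbT. Qed.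

Lemma notM_cls z : z \notin M -> (x0 \notin cls src dst D0 z) && (y0 \notin cls src dst D0 z).
Proof.
rewrite inM negb_or !in_cls => /andP[H1 H2].
by rewrite (csym src dst D0) H1 (csym src dst D0) H2.
Qed.

Lemma part_nconn (nc : ~~ connect r x0 y0) : P = M |: ((P0 :\ Bx) :\ By).
Proof.
apply/setP => B; rewrite in_setU1 !in_setD1; apply/idP/idP.
  rewrite /P partE => /imsetP[z _ ->]; rewrite cls_nconn //.
  case: ifP => zM; first by rewrite eqxx.
  rewrite cls_in !andbT; apply/orP; right.
  have /andP[H1 H2] := notM_cls (negbT zM).
  apply/andP; split; apply/eqP => E.
    by move: H2; rewrite E /By cls_self.
  by move: H1; rewrite E /Bx cls_self.
case/orP => [/eqP ->|/and3P[nBy nBx BP0]].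
  have := cls_in src dst (j0 |: D0) x0; by rewrite cls_nconn // x0M.
have [z Ez] := part_mem BP0.
have zM : z \notin M.
  apply/negP; rewrite inM => /orP[H|H].
    by move: nBx; rewrite Ez /Bx cls_eq (csym src dst D0) H.
  by move: nBy; rewrite Ez /By cls_eq (csym src dst D0) H.
have := cls_in src dst (j0 |: D0) z; by rewrite cls_nconn // (negbTE zM) -Ez.
Qed.

Lemma M_notin : M \notin ((P0 :\ Bx) :\ By).
Proof.
rewrite !in_setD1; apply/negP => /and3P[_ nBx MP0].
by move: nBx; rewrite (mem_part_cls MP0 x0M) eqxx.
Qed.

Lemma BxBy_disj (nc : ~~ connect r x0 y0) : Bx :&: By = set0.
Proof.
apply/setP => w; rewrite !inE; apply/negP => /andP[H1 H2].
move: nc; rewrite (connect_trans H1 _) //; by rewrite (csym src dst D0).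
Qed.

Lemma M_def : M = Bx :|: By. Proof. by []. Qed.

Lemma ecount_M (nc : ~~ connect r x0 y0) :
  ecount D0 M = (ecount D0 Bx + ecount D0 By)%N.
Proof.
rewrite /ecount -big_split /=; apply: eq_bigr => j _.
rewrite M_def in_setU.
have := BxBy_disj nc => /setP/(_ (src j)); rewrite !inE.
by case: (connect _ x0 _); case: (connect _ y0 _).
Qed.

Lemma card_M (nc : ~~ connect r x0 y0) : #|M| = (#|Bx| + #|By|)%N.
Proof. rewrite M_def cardsU BxBy_disj //. by rewrite (@cards0 V) subn0.
Qed.

Lemma x0_notin B : B \in P0 -> B != Bx -> x0 \notin B.
Proof.
move=> BP nB; apply/negP => H; by move: nB; rewrite (mem_part_cls BP H) eqxx.
Qed.

Lemma y0_notin B : B \in P0 -> B != By -> y0 \notin B.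
Proof.
move=> BP nB; apply/negP => H; by move: nB; rewrite (mem_part_cls BP H) eqxx.
Qed.

Lemma inv_step :
  (forall B, B \in P0 -> #|B| <= ecount D0 B + 1)%N ->
  (forall B, B \in P -> #|B| <= ecount (j0 |: D0) B + 1)%N.
Proof.
move=> IH B; rewrite ecount_add.
case: (boolP (connect r x0 y0)) => c.
  rewrite part_conn // => /IH; lia.
rewrite part_nconn // in_setU1 => /orP[/eqP ->|].
  rewrite x0M ecount_M // card_M //.
  have := IH _ (cls_in src dst D0 x0); have := IH _ (cls_in src dst D0 y0).
  rewrite -/Bx -/By; lia.
rewrite !in_setD1 => /and3P[_ _ /IH]; lia.
Qed.

Lemma Fv_fa f B a : Fv D0 (fa f a) B =
  eps (hh ^+ (ecount D0 B + 1 - #|B|) * ((\prod_(x in B) f x) *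
    ((if x0 \in B then b a else 1) * (if y0 \in B then bd a else 1)))).
Proof. by rewrite /Fv /fa big_split /= prod_cf. Qed.

Lemma Fv_out f (B : {set V}) a : x0 \notin B -> y0 \notin B -> Fv D0 (fa f a) B = Fv D0 f B.
Proof. by move=> H1 H2; rewrite Fv_fa (negbTE H1) (negbTE H2) !mulr1. Qed.

Lemma Fv_D f (B : {set V}) : x0 \notin B -> Fv (j0 |: D0) f B = Fv D0 f B.
Proof. by move=> H; rewrite /Fv ecount_add (negbTE H). Qed.

Lemma add_edge f :
  (forall B, B \in P0 -> #|B| <= ecount D0 B + 1)%N ->
  \sum_a \prod_(B in P0) Fv D0 (fa f a) B = \prod_(B in P) Fv (j0 |: D0) f B.
Proof.
move=> IH.
have BxP : Bx \in P0 := cls_in src dst D0 x0.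
have xin : x0 \in Bx := cls_self src dst D0 x0.
have yin : y0 \in By := cls_self src dst D0 y0.
have hhE : \sum_a b a * bd a = hh by [].
case: (boolP (connect r x0 y0)) => c.
  have yx : y0 \in Bx by rewrite in_cls.
  have ByBx : By = Bx by apply/eqP; rewrite /By /Bx cls_eq (csym src dst D0).
  rewrite part_conn //.
  transitivity (\sum_a Fv D0 (fa f a) Bx * \prod_(B in P0 :\ Bx) Fv D0 f B).
    apply: eq_bigr => a _; rewrite (big_setD1 Bx BxP) /=; congr (_ * _).
    apply: eq_bigr => B; rewrite in_setD1 => /andP[nB BP].
    apply: Fv_out; first exact: x0_notin.
    by apply: y0_notin; rewrite ?ByBx.
  rewrite -mulr_suml (big_setD1 Bx BxP) /=.
  congr (_ * _); last first.
    apply: eq_bigr => B; rewrite in_setD1 => /andP[nB BP].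
    by rewrite Fv_D //; exact: x0_notin.
  rewrite (eq_bigr (fun a => eps (hh ^+ (ecount D0 Bx + 1 - #|Bx|) *
     ((\prod_(x in Bx) f x) * (b a * bd a))))); last first.
    by move=> a _; rewrite Fv_fa xin yx.
  rewrite -eps_sum -mulr_sumr -mulr_sumr hhE /Fv ecount_add xin.
  have := IH _ BxP => HB.
  have -> : ((true + ecount D0 Bx) + 1 - #|Bx| = (ecount D0 Bx + 1 - #|Bx|).+1)%N by lia.
  by rewrite exprSr -mulrA [hh * _]mulrC.
have ByP : By \in P0 :\ Bx.
  by rewrite in_setD1 cls_in andbT /By /Bx cls_eq (csym src dst D0).
have yn : y0 \notin Bx by rewrite in_cls.
have xn : x0 \notin By by rewrite in_cls (csym src dst D0).
rewrite part_nconn // big_setU1 ?M_notin //=.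
transitivity (\sum_a Fv D0 (fa f a) Bx * Fv D0 (fa f a) By *
   \prod_(B in (P0 :\ Bx) :\ By) Fv D0 f B).
  apply: eq_bigr => a _; rewrite (big_setD1 Bx BxP) (big_setD1 By ByP) /= mulrA.
  congr (_ * _); apply: eq_bigr => B; rewrite !in_setD1 => /and3P[nBy nBx BP].
  by apply: Fv_out; [exact: x0_notin | exact: y0_notin].
rewrite -mulr_suml; congr (_ * _); last first.
  apply: eq_bigr => B; rewrite !in_setD1 => /and3P[nBy nBx BP].
  by rewrite Fv_D //; exact: x0_notin.
set U := hh ^+ (ecount D0 Bx + 1 - #|Bx|) * \prod_(x in Bx) f x.
set W := hh ^+ (ecount D0 By + 1 - #|By|) * \prod_(x in By) f x.
rewrite (eq_bigr (fun a => eps (U * b a) * eps (bd a * W))); last first.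
  move=> a _; rewrite !Fv_fa xin (negbTE yn) (negbTE xn) yin.
  by congr (eps _ * eps _); rewrite ?mulr1 ?mul1r mulrA // mulrC.
rewrite Hfrob /Fv ecount_add x0M ecount_M // card_M //.
have -> : \prod_(x in M) f x = (\prod_(x in Bx) f x) * \prod_(x in By) f x.
  rewrite M_def -bigU; last by rewrite -setI_eq0 BxBy_disj.
  by apply: eq_bigl => x; rewrite !inE.
have := IH _ BxP; have := IH _ (cls_in src dst D0 y0); rewrite -/By => H2 H1.
have -> : ((true + (ecount D0 Bx + ecount D0 By)) + 1 - (#|Bx| + #|By|) =
   (ecount D0 Bx + 1 - #|Bx|) + (ecount D0 By + 1 - #|By|))%N by lia.
by rewrite exprD /U /W mulrACA.
Qed.
End Step.

Lemma set_induct (Pr : {set I} -> Prop) : Pr set0 ->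
  (forall (j0 : I) (D0 : {set I}), j0 \notin D0 -> Pr D0 -> Pr (j0 |: D0)) -> forall D, Pr D.
Proof.
move=> H0 HS D; move: {2}#|D| (erefl #|D|) => n.
elim: n D => [|n IH] D HD; first by rewrite (cards0_eq HD).
have : D != set0 by apply/eqP => E; rewrite E cards0 in HD.
case/set0Pn => j0 j0D; rewrite -(setD1K j0D); apply: HS; first by rewrite setD11.
by apply: IH; move: HD; rewrite (cardsD1 j0) j0D add1n => -[].
Qed.

Lemma cls0 z : cls src dst set0 z = [set z].
Proof.
apply/setP => y; rewrite in_cls inE; apply/idP/eqP => [|->]; last exact: connect0.
case/connectP => -[|w p] /=; first by move=> _ ->.
case/andP => /existsP[j]; by rewrite inE.
Qed.

Lemma part0 : part src dst set0 = [set [set z] | z in [set: V]].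
Proof. by rewrite partE; apply: eq_imset => z; exact: cls0. Qed.

Lemma inv_part D : forall B, B \in part src dst D -> (#|B| <= ecount D B + 1)%N.
Proof.
elim/set_induct: D => [|j0 D0 j0n IH].
  by rewrite part0 => B /imsetP[z _ ->]; rewrite cards1 /ecount big_set0.
exact: inv_step.
Qed.

Theorem glue D f :
  Lsum D f = #|S|%:R ^+ #|~: D| * \prod_(B in part src dst D) Fv D f B.
Proof.
elim/set_induct: D f => [|j0 D0 j0n IH] f.
  rewrite /Lsum part0 big_imset /=; last by move=> x y _ _; apply: set1_inj.
  rewrite (eq_bigr (fun _ => \prod_x eps (f x))); last first.
    by move=> l _; apply: eq_bigr => x _; rewrite big_set0 mulr1.
  rewrite sumr_const card_ffun setC0 cardsT -natrX mulr_natl; congr (_ *+ _).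
  apply: eq_big => [x|x _]; first by rewrite inE.
  by rewrite /Fv cards1 /ecount big_set0 big_set1 expr0 mul1r.
apply: (mulfI HN); rewrite Lsum_step //.
rewrite (eq_bigr (fun a => #|S|%:R ^+ #|~: D0| *
   \prod_(B in part src dst D0) Fv D0 (fun x => f x * cf x j0 a) B)); last first.
  by move=> a _; rewrite IH.
rewrite -mulr_sumr add_edge //; last exact: inv_part.
have -> : #|~: D0| = #|~: (j0 |: D0)|.+1.
  have := cardsC D0; have := cardsC (j0 |: D0); rewrite cardsU1 j0n; lia.
by rewrite exprS mulrA.
Qed.
End Frob.


Lemma ecountT (I V : finType) (src : I -> V) (B : {set V}) :
  ecount src setT B = #|[set j | src j \in B]|.
Proof.
rewrite /ecount -sum1_card [RHS]big_mkcond [LHS]big_mkcond /=.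
by apply: eq_bigr => j _; rewrite !inE; case: (src j \in B).
Qed.

Lemma bpK d n (s : 'S_d) : cancel (@block_perm d n s^-1) (block_perm s).
Proof. by case=> x y; rewrite /block_perm /= permKV. Qed.

Section Pseudo.
Variables (k : fieldType) (hk : [pchar k] =i pred0) (A : comPzRingType) (eps : A -> k).
Hypotheses (eps0 : eps 0 = 0) (epsD : {morph eps : u v / u + v}).
Variables (S : finType) (b bd : S -> A).
Hypothesis Hfrob : forall u v, \sum_a eps (u * b a) * eps (bd a * v) = eps (u * v).
Hypothesis HS : (0 < #|S|)%N.

Lemma HN : (#|S|%:R : k) != 0.
Proof. by move/pcharf0P: hk => ->; rewrite -lt0n. Qed.

Let alpha G := eps (hh b bd ^+ G).

Lemma closure_Lsum (I : finType) c (gen : 'I_c -> nat) (inp outp : I -> 'I_c) tau :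
  closure_eval alpha gen inp outp tau =
  Lsum eps b bd outp (fun j => inp (tau j)) setT (fun x => hh b bd ^+ gen x).
Proof.
rewrite (glue eps0 epsD Hfrob HN) setCT cards0 expr0 mul1r /closure_eval.
have E : part outp (fun j => inp (tau j)) setT =
    equivalence_partition (connect (glue_rel inp outp tau)) [set: 'I_c].
  rewrite partE /equivalence_partition; apply: eq_imset => z; apply/setP => y.
  rewrite !inE /=; apply: eq_connect => x w; rewrite /grel /glue_rel.
  apply/existsP/existsP => -[j]; [rewrite in_setT /= => H | move=> H];
    by exists j; rewrite ?in_setT.
rewrite -E; apply: eq_bigr => B BP.
rewrite /Fv prodrXr -exprD /comp_genus /alpha.
have := inv_part HN BP; rewrite ecountT.
set e := #|[set j | outp j \in B]|; set gs := \sum_(i in B) gen i; move=> HB.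
have -> : (gs + e + 1 - #|B| = e + 1 - #|B| + gs)%N by lia.
by [].
Qed.

Lemma two_neq0 : (2%:R : k) != 0.
Proof. by move/pcharf0P: hk => ->. Qed.

Theorem frob_pseudo : pseudocharacter alpha.
Proof.
move=> n; exists #|{ffun 'I_n -> S}| => c gen inp outp.
set d := #|{ffun 'I_n -> S}|.
rewrite /antisym_trace.
set f := fun x => hh b bd ^+ gen x.
pose Q (l : {ffun 'I_d.+1 * 'I_n -> S}) (g : 'I_d.+1 * 'I_n -> S) :=
  \prod_x eps (f x * ((\prod_j (if outp j == x then b (l j) else 1)) *
     \prod_j (if inp j == x then bd (g j) else 1))).
have EQ l g1 g2 : g1 =1 g2 -> Q l g1 = Q l g2.
  move=> E; apply: eq_bigr => x _; congr (eps (_ * (_ * _))).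
  by apply: eq_bigr => j _; rewrite E.
have Hs s : closure_eval alpha gen inp outp (block_perm s) =
    \sum_(l : {ffun 'I_d.+1 * 'I_n -> S}) Q l (fun j => l (block_perm s^-1 j)).
  rewrite closure_Lsum /Lsum; apply: eq_bigr => l _; rewrite /Phi /Q.
  apply: eq_bigr => x _; congr (eps (_ * _)).
  rewrite (eq_bigl xpredT); last by move=> j; rewrite in_setT.
  rewrite big_split /=; congr (_ * _).
  rewrite (reindex_inj (can_inj (@bpK d.+1 n s))) /=.
  by apply: eq_bigr => j _; rewrite bpK.
rewrite (eq_bigr (fun s => \sum_(l : {ffun 'I_d.+1 * 'I_n -> S})
   (-1) ^+ odd_perm s * Q l (fun j => l (block_perm s^-1 j)))); last first.
  by move=> s _; rewrite Hs mulr_sumr.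
rewrite exchange_big /=; apply: big1 => l _.
pose g := fun bb : 'I_d.+1 => [ffun kk : 'I_n => l (bb, kk)].
have : ~~ injectiveb g.
  by apply/injectiveP => /leq_card; rewrite card_ord ltnn.
case/injectivePn => b1 [b2 nb Eg].
have Hl j : l (block_perm (tperm b1 b2) j) = l j.
  case: j => bb kk; rewrite /block_perm /=.
  have := congr1 (fun F : {ffun 'I_n -> S} => F kk) Eg; rewrite !ffunE => E.
  by case: tpermP => [->|->|//]; rewrite E.
set X := \sum_s _.
have HX : X = - X.
  rewrite {1}/X (reindex_inj (mulgI (tperm b1 b2))) /= -sumrN.
  apply: eq_bigr => s _.
  rewrite odd_permM odd_tperm nb /=.
  rewrite (EQ _ _ (fun j => l (block_perm s^-1 j))); last first.
    move=> j; rewrite invMg tpermV -(Hl (block_perm s^-1 j)) /block_perm /=.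
    by rewrite permM.
  by case: (odd_perm s); rewrite /= ?expr0 ?expr1 ?mulN1r ?mul1r ?opprK.
have : X *+ 2 = 0 by rewrite mulr2n {1}HX addNr.
by rewrite -mulr_natl => /eqP; rewrite mulf_eq0 (negbTE two_neq0) => /eqP.
Qed.

End Pseudo.


HB.instance Definition _ (T : finType) (R : comPzRingType) :=
  GRing.PzSemiRing_hasCommutativeMul.Build {ffun T -> R} (@ffun_mulC T R).

Section Constr.
Variables (k : fieldType) (mu : k) (m' : nat) (s : nat) (ms : 'I_s -> nat) (lam : 'I_s -> k).
Hypothesis hlam : forall i, lam i != 0.
Let M := (\sum_(i < s) ms i)%N.
Let T := ('I_s * 'I_M)%type.
Let act (t : T) : bool := (t.2 < ms t.1)%N.
Let w (t : T) : k := if act t then (lam t.1)^-1 else 0.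
Let v (t : T) : k := if act t then lam t.1 else 0.
Let A := ({poly k} * {ffun T -> k})%type.
Definition eps0p (p : {poly k}) := mu * p`_0 + p`_(m'.+1).
Definition epsA (u : A) : k := eps0p u.1 + \sum_t w t * u.2 t.
Let S := ('I_(m'.+2) + T)%type.
Let e (t : T) : {ffun T -> k} := [ffun t' => (t' == t)%:R].
Let e' (t : T) : {ffun T -> k} := [ffun t' => (t' == t)%:R * v t].
Let y (j : 'I_(m'.+2)) : {poly k} :=
  if (j < m'.+1)%N then 'X^(m'.+1 - j) else 1 - mu *: 'X^(m'.+1).
Definition bA (a : S) : A := match a with inl j => ('X^j, 0) | inr t => (0, e t) end.
Definition bdA (a : S) : A := match a with inl j => (y j, 0) | inr t => (0, e' t) end.

Lemma epsA0 : epsA 0 = 0.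
Proof.
rewrite /epsA /eps0p /= !coef0 mulr0 !add0r big1 // => t _; by rewrite ffunE mulr0.
Qed.

Lemma epsAD : {morph epsA : u1 u2 / u1 + u2}.
Proof.
move=> u1 u2; rewrite /epsA /eps0p /= !coefD.
rewrite (eq_bigr (fun t => w t * u1.2 t + w t * u2.2 t)); last first.
  by move=> t _; rewrite ffunE mulrDr.
rewrite big_split /=; ring.
Qed.

Lemma sum_delta (F : T -> k) t : \sum_t' (t' == t)%:R * F t' = F t.
Proof.
rewrite (bigD1 t) //= eqxx mul1r big1 ?addr0 // => t' /negbTE ->; by rewrite mul0r.
Qed.

Lemma eps_l p : epsA (p, 0) = eps0p p.
Proof. by rewrite /epsA big1 ?addr0 // => t _; rewrite ffunE mulr0. Qed.

Lemma eps_r f : epsA (0, f) = \sum_t w t * f t.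
Proof. by rewrite /epsA /eps0p !coef0 mulr0 !add0r. Qed.

Lemma y_ev j p : eps0p (y j * p) = p`_j.
Proof.
rewrite /y /eps0p; case: ifP => Hj.
  rewrite !coefXnM; have -> : (0 < m'.+1 - j)%N by lia.
  have -> : (m'.+1 < m'.+1 - j)%N = false by lia.
  have -> : (m'.+1 - (m'.+1 - j) = j)%N by lia.
  by rewrite mulr0 add0r.
have -> : (j : nat) = m'.+1 by have := ltn_ord j; lia.
rewrite mulrBl mul1r -scalerAl !coefB !coefZ !coefXnM ltnn subnn /=; ring.
Qed.

Lemma frob0 u p : \sum_(j < m'.+2) eps0p (u * 'X^j) * eps0p (y j * p) = eps0p (u * p).
Proof.
under eq_bigr do rewrite y_ev.
rewrite /eps0p !coefMr big_ord1 [LHS]big_ord_recl [in RHS]big_ord_recl /=.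
rewrite (eq_bigr (fun j : 'I_m'.+1 => u`_(m'.+1 - (bump 0 j)) * p`_(bump 0 j))); last first.
  move=> j _; rewrite !coefMXn /bump /=.
  have -> : (m'.+1 < 1 + j)%N = false by have := ltn_ord j; lia.
  by rewrite mulr0 add0r.
rewrite !coefMXn /= !subn0; ring.
Qed.


Lemma pairM (x z : A) : x * z = (x.1 * z.1, x.2 * z.2). Proof. by []. Qed.

Lemma wv t : w t * (w t * v t) = w t.
Proof. by rewrite /w /v; case: ifP => _; rewrite ?mul0r // mulVf ?mulr1. Qed.

Lemma frobA u p : \sum_a epsA (u * bA a) * epsA (bdA a * p) = epsA (u * p).
Proof.
rewrite big_sumType /= [in RHS]pairM [RHS]/epsA /=.
congr (_ + _).
  rewrite -frob0; apply: eq_bigr => j _.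
  by rewrite !pairM /= mulr0 mul0r !eps_l.
rewrite (eq_bigr (fun t => w t * u.2 t * p.2 t)); last first.
  move=> t _; rewrite !pairM /= mulr0 mul0r !eps_r.
  rewrite (eq_bigr (fun t' => (t' == t)%:R * (w t' * u.2 t'))); last first.
    by move=> t' _; rewrite !ffunE; ring.
  rewrite sum_delta.
  rewrite (eq_bigr (fun t' => (t' == t)%:R * (w t' * v t * p.2 t'))); last first.
    by move=> t' _; rewrite !ffunE; ring.
  rewrite sum_delta.
  have := wv t => Hw.
  transitivity ((w t * (w t * v t)) * u.2 t * p.2 t); first by ring.
  by rewrite Hw.
by apply: eq_bigr => t _; rewrite ffunE mulrA.
Qed.

Definition h0 := \sum_(j < m'.+2) 'X^j * y j.
Definition c0 : {poly k} := (m'.+1)%:R + (1 - mu *: 'X^(m'.+1)).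

Lemma h0E : h0 = 'X^(m'.+1) * c0.
Proof.
rewrite /h0 big_ord_recr /= /y /= ltnn.
rewrite (eq_bigr (fun _ => 'X^(m'.+1))); last first.
  move=> j _; rewrite /= ltn_ord -exprD; congr ('X^_).
  by have := ltn_ord j; lia.
by rewrite sumr_const card_ord /c0 [RHS]mulrDr mulr_natr.
Qed.

Lemma hh_fst : (hh bA bdA).1 = h0.
Proof.
rewrite /hh (big_morph fst (fun _ _ => erefl) (erefl : (0 : A).1 = 0)).
rewrite big_sumType /= [X in _ + X]big1 ?addr0 // => t _; exact: mul0r.
Qed.

Lemma hh_snd t : (hh bA bdA).2 t = v t.
Proof.
rewrite /hh (big_morph snd (fun _ _ => erefl) (erefl : (0 : A).2 = 0)).
rewrite sum_ffunE big_sumType /= big1 ?add0r; last by move=> j _; rewrite mulr0 ffunE.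
rewrite (eq_bigr (fun t' => (t' == t)%:R * v t')); last first.
  move=> t' _; rewrite !ffunE eq_sym; case: eqP => _; rewrite ?mul1r ?mul0r //.
exact: (sum_delta v t).
Qed.

Lemma expfst (x : A) G : (x ^+ G).1 = x.1 ^+ G.
Proof. by elim: G => [|G IH]; rewrite ?expr0 // !exprS -IH. Qed.
Lemma expsnd (x : A) G t : (x ^+ G).2 t = x.2 t ^+ G.
Proof.
elim: G => [|G IH]; first by rewrite !expr0 ffunE.
by rewrite !exprS -IH /= ffunE.
Qed.

Lemma eps0h G : eps0p (h0 ^+ G) =
  (if G == 0%N then mu else 0) + (if G == 1%N then (m'.+2)%:R else 0).
Proof.
case: G => [|[|G]] /=.
- by rewrite /eps0p expr0 !coef1 /=; ring.
- rewrite expr1 h0E /eps0p !coefXnM ltnn subnn /= /c0.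
  rewrite coefD coefB coefZ coefXn -!polyC1 -polyCMn !coefC /=.
  by rewrite mulr0 !add0r subr0 [in RHS]mulrS addrC.
- rewrite h0E exprMn -exprM /eps0p !coefXnM.
  have -> : (0 < m'.+1 * G.+2)%N by rewrite muln_gt0.
  have -> : (m'.+1 < m'.+1 * G.+2)%N.
    by rewrite -{1}(muln1 m'.+1) ltn_mul2l.
  by rewrite mulr0 add0r.
Qed.

Lemma alpha_val G : epsA (hh bA bdA ^+ G) =
  (if G == 0%N then mu else 0) + (if G == 1%N then (m'.+2)%:R else 0)
  + \sum_(i < s) (ms i)%:R * (lam i)^-1 * (lam i) ^+ G.
Proof.
rewrite /epsA expfst hh_fst eps0h; congr (_ + _).
under eq_bigr do rewrite expsnd hh_snd.
rewrite -(pair_big xpredT xpredT (fun i j => w (i, j) * v (i, j) ^+ G)) /=.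
apply: eq_bigr => i _.
rewrite (eq_bigr (fun j : 'I_M => if (j < ms i)%N then (lam i)^-1 * lam i ^+ G else 0)); last first.
  by move=> j _; rewrite /w /v /act /=; case: ifP => _; rewrite ?mul0r.
rewrite -big_mkcond /= -(big_ord_widen M (fun _ => (lam i)^-1 * lam i ^+ G)); last first.
  by rewrite /M (bigD1 i) //= leq_addr.
by rewrite sumr_const card_ord -mulrA mulr_natl.
Qed.
End Constr.

End Helpers.
Import Helpers.

Theorem mainTheorem12 (k : closedFieldType) (hk : [pchar k] =i pred0)
  (mu : k) (m : nat) (hm : (2 <= m)%N) (s : nat) (ms : 'I_s -> nat)
  (lam : 'I_s -> k) (hms : forall i, (1 <= ms i)%N) (hlam : forall i, lam i != 0) :
  exists alpha : nat -> k,
    pseudocharacter alpha /\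
    forall g : nat,
      alpha g = (if g == 0%N then mu else 0) + (if g == 1%N then m%:R else 0)
                + \sum_(i < s) (ms i)%:R * (lam i)^-1 * (lam i) ^+ g.
Proof.
case: m hm => [|[|m']] // hm.
exists (fun G => epsA mu m' (ms:=ms) lam
  (hh (bA k (m':=m') (ms:=ms)) (bdA mu (m':=m') (ms:=ms) lam) ^+ G)).
split; last by move=> g; exact: alpha_val.
apply: (frob_pseudo hk (epsA0 mu m' ms lam) (epsAD mu m' lam) (frobA mu m' hlam)).
by apply/card_gt0P; exists (inl ord0).
Qed.
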